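(* Let $q\in\mathcal{X}$ be pathless. Then $E\big(D(q)\big)=B\big(A(q)\big)$ (as elements of $\mathcal{T}[[w]]$).
   Context: Let $\mathbf{k}$ be a commutative ring, $\beta,\alpha\in\mathbf{k}$, $n$ a positive integer; write $[m]=\{1,\dots,m\}$. Let $\mathcal{X}=\mathbf{k}[x_{i,j}\mid 1\le i<j\le n]$ (polynomial ring). A monomial in the $x_{i,j}$ is pathless if there is no triple $1\le i<j<k\le n$ with $x_{i,j}x_{j,k}$ dividing it; a polynomial is pathless if it is a $\mathbf{k}$-linear combination of pathless monomials. Laurent series: for symbols $r_1,\dots,r_n$, a Laurent series over $\mathbf{k}$ is a formal sum $\sum_{a\in\mathbb{Z}^n}\lambda_a r_1^{a_1}\cdots r_n^{a_n}$ ($\lambda_a\in\mathbf{k}$) for which there is $d\in\mathbb{Z}$ with $\lambda_a=0$ whenever some $a_i<d$. Let $\mathcal{Q}$ be the $\mathbf{k}$-algebra of such series with the usual multiplication and coefficientwise (product) topology, $\mathbf{k}$ discrete. For $i\in[n]$ put $q_i=r_ir_{i+1}\cdots r_n$; every Laurent monomial is uniquely of the form $q_1^{a_1}\cdots q_n^{a_n}$, $a\in\mathbb{Z}^n$, so every element of $\mathcal{Q}$ is uniquely an infinite sum $\sum_a\mu_a q_1^{a_1}\cdots q_n^{a_n}$; for $i<j$, $1-q_i/q_j=1-r_i\cdots r_{j-1}$ is invertible. Let $A:\mathcal{X}\to\mathcal{Q}$ be the $\mathbf{k}$-algebra homomorphism with $A(x_{i,j})=-\dfrac{q_i+\beta+\alpha/q_j}{1-q_i/q_j}$.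 Let $\mathcal{T}=\mathbf{k}[[t_1,\dots,t_n]]$ and $\mathcal{T}[[w]]$ the formal power series ring in a further indeterminate $w$ over $\mathcal{T}$ (coefficientwise topology). Let $B:\mathcal{Q}\to\mathcal{T}[[w]]$ be the continuous $\mathbf{k}$-linear map $B\big(\sum_a\mu_a q_1^{a_1}\cdots q_n^{a_n}\big)=\sum_a\mu_a\prod_{i:\,a_i>0}t_i^{a_i}\prod_{i:\,a_i<0}w^{-a_i}$ (convergent since each monomial in $t_1,\dots,t_n,w$ arises from only finitely many $a$); $B$ is in general not multiplicative. Let $\mathcal{T}'=\mathbf{k}[t_1,\dots,t_{n-1}]\subseteq\mathcal{T}$, so $\mathcal{T}'[[w]]\subseteq\mathcal{T}[[w]]$; let $D:\mathcal{X}\to\mathcal{T}'$ be the $\mathbf{k}$-algebra homomorphism with $D(x_{i,j})=t_i$, and $E:\mathcal{T}'\to\mathcal{T}'[[w]]$ the $\mathbf{k}$-algebra homomorphism with $E(t_i)=-\dfrac{t_i+\beta+\alpha w}{1-t_iw}$. *)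

(* Defs.v *)
From HB Require Import structures.
From mathcomp Require Import all_boot all_order all_algebra.
Set Implicit Arguments. Unset Strict Implicit. Unset Printing Implicit Defensive.
Import Order.TTheory GRing.Theory Num.Theory.
Local Open Scope ring_scope.

(* Indices 1..n of the paper are 'I_n here (0-based). *)

Section Defs.
Variables (R : comPzRingType) (n : nat) (beta alpha : R).

(* A monomial prod_{i<j} x_{i,j}^(e i j) is given by an exponent function
   e (entries with i >= j are ignored); a polynomial is given as a finite
   R-linear combination of monomials (list of (coefficient, exponent)). *)
Definition xmono := 'I_n -> 'I_n -> nat.
Definition xpoly := seq (R * xmono).

Definition pathless_mono (e : xmono) : bool :=
  [forall i : 'I_n, forall j : 'I_n, forall l : 'I_n,
     ~~ [&& (i < j)%N, (j < l)%N, (0 < e i j)%N & (0 < e j l)%N]].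

(* lco b = coefficient of r^b; lb is a lower bound d: lco b = 0 whenever
   some b_k < d (invariant maintained by all constructions below). *)
Record laur := Laur { lb : int; lco : ('I_n -> int) -> R }.

Definition qzero : laur := Laur 0 (fun _ => 0).
Definition qone : laur := Laur 0 (fun b => if [forall k, b k == 0] then 1 else 0).
Definition qadd (F G : laur) : laur :=
  Laur (if lb F <= lb G then lb F else lb G) (fun b => lco F b + lco G b).
Definition qscale (c : R) (F : laur) : laur := Laur (lb F) (fun b => c * lco F b).
(* Cauchy product: the a with a_k >= lb F and c_k - a_k >= lb G form a
   finite box. *)
Definition qmul (F G : laur) : laur :=
  Laur (lb F + lb G) (fun c =>
    let M := (\max_(k < n) absz (c k - lb F - lb G)%R)%N in
    \sum_(t : {ffun 'I_n -> 'I_M.+1} |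
            [forall k, lb G <= c k - (lb F + (t k)%:Z)])
      lco F (fun k => lb F + (t k)%:Z) * lco G (fun k => c k - (lb F + (t k)%:Z))).
Definition qpow (F : laur) (m : nat) : laur := iter m (qmul F) qone.

Definition qmon (e : 'I_n -> int) : laur :=
  Laur (- ((\sum_(k < n) absz (e k))%N)%:Z)
       (fun b => if [forall k, b k == e k] then 1 else 0).
(* q_i = r_i ... r_n  and  1/q_j *)
Definition q_exp (i : 'I_n) : 'I_n -> int := fun k => if (i <= k)%N then 1 else 0.
Definition qinv_exp (j : 'I_n) : 'I_n -> int := fun k => if (j <= k)%N then -1 else 0.

(* (1 - q_i/q_j)^{-1} = (1 - r_i...r_{j-1})^{-1} = sum_{m>=0} (r_i...r_{j-1})^m *)
Definition geomA (i j : 'I_n) : laur :=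
  Laur 0 (fun b =>
    if [forall k : 'I_n, b k == (if (i <= k < j)%N then b i else 0)] && (0 <= b i)
    then 1 else 0).
Definition numA (i j : 'I_n) : laur :=
  qscale (-1) (qadd (qmon (q_exp i))
                    (qadd (qscale beta qone) (qscale alpha (qmon (qinv_exp j))))).
Definition Ax (i j : 'I_n) : laur := qmul (numA i j) (geomA i j).

Definition A_mono (e : xmono) : laur :=
  \big[qmul/qone]_(i < n) \big[qmul/qone]_(j < n | (i < j)%N) qpow (Ax i j) (e i j).
Definition A_poly (p : xpoly) : laur :=
  foldr (fun ce acc => qadd (qscale ce.1 (A_mono ce.2)) acc) qzero p.

(* coefficient of q_1^{a_1}...q_n^{a_n}: this is r^b with b_k = a_1+...+a_k *)
Definition qcoef (F : laur) (a : 'I_n -> int) : R :=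
  lco F (fun k => \sum_(l < n | (l <= k)%N) a l).

(* ps u m = coefficient of t^u w^m *)
Definition ps := ('I_n -> nat) -> nat -> R.

(* the map B : Q -> T[[w]]: the q-exponent a with t^u w^m is
   a_k = u_k - s_k where s_k > 0 only if u_k = 0 and sum_k s_k = m *)
Definition B (F : laur) : ps := fun u m =>
  \sum_(s : {ffun 'I_n -> 'I_m.+1} |
          ((\sum_(k < n) (s k : nat))%N == m) && [forall k, (0 < s k)%N ==> (u k == 0%N)])
     qcoef F (fun k => (u k)%:Z - (s k : nat)%:Z).

Definition pszero : ps := fun _ _ => 0.
Definition psone : ps := fun u m => if [forall k, u k == 0%N] && (m == 0%N) then 1 else 0.
Definition psadd (f g : ps) : ps := fun u m => f u m + g u m.
Definition psscale (c : R) (f : ps) : ps := fun u m => c * f u m.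
Definition psmul (f g : ps) : ps := fun u m =>
  let U := (\max_(k < n) u k)%N in
  \sum_(t : {ffun 'I_n -> 'I_U.+1} | [forall k, (t k <= u k)%N])
    \sum_(l < m.+1) f (fun k => t k : nat) l * g (fun k => (u k - t k)%N) (m - l)%N.
Definition pspow (f : ps) (m : nat) : ps := iter m (psmul f) psone.

Definition tpoly := seq (R * ('I_n -> nat)).
(* D(x_{i,j}) = t_i: the monomial prod x_{i,j}^{e i j} goes to prod_i t_i^{sum_{j>i} e i j} *)
Definition D_poly (p : xpoly) : tpoly :=
  [seq (ce.1, fun i : 'I_n => (\sum_(j < n | (i < j)%N) ce.2 i j)%N) | ce <- p].

(* -(t_i + beta + alpha w) *)
Definition numE (i : 'I_n) : ps := fun u m =>
  - ((if [forall k, u k == (k == i : nat)] && (m == 0%N) then 1 else 0)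
     + (if [forall k, u k == 0%N] && (m == 0%N) then beta else 0)
     + (if [forall k, u k == 0%N] && (m == 1%N) then alpha else 0)).
(* (1 - t_i w)^{-1} = sum_m t_i^m w^m *)
Definition geomE (i : 'I_n) : ps := fun u m =>
  if [forall k, u k == (if k == i then m else 0%N)] then 1 else 0.
Definition Et (i : 'I_n) : ps := psmul (numE i) (geomE i).

Definition E_poly (p : tpoly) : ps :=
  foldr (fun cv acc => psadd (psscale cv.1 (\big[psmul/psone]_(i < n) pspow (Et i) (cv.2 i))) acc)
        pszero p.

End Defs.

(* Main.v *)
Require Import Defs.
From HB Require Import structures.
From mathcomp Require Import all_boot all_order all_algebra.
From mathcomp Require Import zify.
From Stdlib Require Import FunctionalExtensionality.
Import Order.TTheory GRing.Theory Num.Theory.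
Set Implicit Arguments. Unset Strict Implicit. Unset Printing Implicit Defensive.
Local Open Scope ring_scope.

Ltac genff := repeat match goal with |- context [@fun_of_fin ?a ?b ?f ?j] =>
  let z := fresh "z" in move: (@fun_of_fin a b f j) => z end.
Ltac nlia := genff; lia.

Lemma ls_eq (T : eqType) (R : nmodType) (s1 s2 : seq T) (f : T -> R) :
  uniq s1 -> uniq s2 -> (forall x, f x != 0 -> (x \in s1) = (x \in s2)) ->
  \sum_(x <- s1) f x = \sum_(x <- s2) f x.
Proof.
move=> u1 u2 H.
have E : forall s, \sum_(x <- s) f x = \sum_(x <- s | f x != 0) f x.
  move=> s; rewrite [RHS]big_mkcond; apply: eq_bigr => x _.
  by case: eqP => // ->.
rewrite (E s1) (E s2) -(big_filter s1) -(big_filter s2); apply: perm_big; apply: uniq_perm; rewrite ?filter_uniq //.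
move=> x; rewrite !mem_filter; case Hx: (f x != 0) => //=; exact: H.
Qed.

Lemma sum_pred1_seq (T : eqType) (R : nmodType) (s : seq T) x0 (F : T -> R) :
  uniq s -> \sum_(x <- s | x == x0) F x = if x0 \in s then F x0 else 0.
Proof.
elim: s => [|y s IH] /=; first by rewrite big_nil.
move=> /andP[ys us]; rewrite big_cons IH // in_cons.
case: (eqVneq y x0) => [<-|ne] /=.
  by rewrite (negbTE ys) addr0.
by [].
Qed.

Definition allN (J : finType) (K : nat) : seq {ffun J -> nat} :=
  map (fun t : {ffun J -> 'I_K.+1} => [ffun j => nat_of_ord (t j)]) (enum {ffun J -> 'I_K.+1}).

Lemma allN_uniq J K : uniq (allN J K).
Proof.
rewrite map_inj_uniq ?enum_uniq // => t t' /ffunP H; apply/ffunP => j.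
by apply: val_inj; move: (H j); rewrite !ffunE.
Qed.

Lemma mem_allN J K x : (x \in allN J K) = [forall j, (x j <= K)%N].
Proof.
apply/mapP/forallP.
  by move=> [t _ ->] j; rewrite ffunE -ltnS.
move=> H; exists [ffun j => inord (x j) : 'I_K.+1]; first by rewrite mem_enum.
by apply/ffunP => j; rewrite !ffunE inordK // ltnS.
Qed.

Definition leV (J : finType) (x y : {ffun J -> nat}) := [forall j, (x j <= y j)%N].
Definition addV (J : finType) (x y : {ffun J -> nat}) : {ffun J -> nat} := [ffun j => (x j + y j)%N].
Definition subV (J : finType) (x y : {ffun J -> nat}) : {ffun J -> nat} := [ffun j => (x j - y j)%N].
Lemma addVE (J : finType) (x y : {ffun J -> nat}) j : addV x y j = (x j + y j)%N.
Proof. by rewrite ffunE. Qed.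
Lemma subVE (J : finType) (x y : {ffun J -> nat}) j : subV x y j = (x j - y j)%N.
Proof. by rewrite ffunE. Qed.

Definition bnd (J : finType) (w : {ffun J -> nat}) := (\max_j w j)%N.

Lemma le_bnd (J : finType) (w : {ffun J -> nat}) j : (w j <= bnd w)%N.
Proof. exact: (leq_bigmax j). Qed.

Lemma transl (R : nmodType) (J : finType) K x (P : pred {ffun J -> nat}) (F : {ffun J -> nat} -> R) :
  (forall y, P (addV x y) -> forall j, (x j + y j <= K)%N) ->
  \sum_(p <- allN J K | P p && leV x p) F p = \sum_(y <- allN J K | P (addV x y)) F (addV x y).
Proof.
move=> HK.
rewrite -[RHS](big_filter _ (fun y => P (addV x y))) -(big_map (addV x) xpredT).
rewrite big_mkcond [RHS](eq_big_seq (fun p => if P p && leV x p then F p else 0)).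
  apply: ls_eq; first exact: allN_uniq.
    rewrite map_inj_uniq ?filter_uniq ?allN_uniq //.
    by move=> y y' /ffunP H; apply/ffunP => j; move: (H j); rewrite !addVE; nlia.
  move=> p; case: ifP => [/andP[Pp /forallP lxp] _|]; last by rewrite eqxx.
  have Ep : p = addV x (subV p x) by apply/ffunP => j; rewrite addVE subVE; move: (lxp j); nlia.
  have Hb := HK _ (eq_ind _ P Pp _ Ep).
  apply/idP/mapP.
    move=> _; exists (subV p x) => //; rewrite mem_filter -Ep Pp mem_allN.
    by apply/forallP => j; move: (Hb j); rewrite subVE; nlia.
  move=> _; rewrite mem_allN; apply/forallP => j; move: (Hb j).
  by rewrite {2}Ep addVE; nlia.
move=> p /mapP[y]; rewrite mem_filter => /andP[Py _] ->.
rewrite Py /=; suff -> : leV x (addV x y) by [].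
by apply/forallP => j; rewrite addVE leq_addr.
Qed.

Lemma subV_addVK (J : finType) (x y : {ffun J -> nat}) : subV (addV x y) x = y.
Proof. by apply/ffunP => j; rewrite subVE addVE addKn. Qed.
Lemma subV_addV (J : finType) (w x y : {ffun J -> nat}) : subV w (addV x y) = subV (subV w x) y.
Proof. by apply/ffunP => j; rewrite !subVE addVE subnDA. Qed.

Definition convK (R : pzSemiRingType) (J : finType) K (f g : {ffun J -> nat} -> R) (w : {ffun J -> nat}) :=
  \sum_(x <- allN J K | leV x w) f x * g (subV w x).
Definition conv (R : pzSemiRingType) (J : finType) (f g : {ffun J -> nat} -> R) (w : {ffun J -> nat}) :=
  convK (bnd w) f g w.

Lemma leV_bnd (J : finType) (x w : {ffun J -> nat}) K :
  leV x w -> (forall j, w j <= K)%N -> [forall j, x j <= K]%N.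
Proof. by move=> /forallP H HK; apply/forallP => j; exact: leq_trans (H j) (HK j). Qed.

Lemma convKE (R : pzSemiRingType) (J : finType) K (f g : {ffun J -> nat} -> R) (w : {ffun J -> nat}) :
  (forall j, w j <= K)%N -> conv f g w = convK K f g w.
Proof.
move=> HK; rewrite /conv /convK big_mkcond [RHS]big_mkcond; apply: ls_eq; rewrite ?allN_uniq //.
move=> x; case: ifP => [lxw _|]; last by rewrite eqxx.
rewrite !mem_allN (leV_bnd lxw HK) (leV_bnd lxw (le_bnd w)) //.
Qed.

Lemma conv_assoc (R : pzSemiRingType) (J : finType) (f g h : {ffun J -> nat} -> R) (w : {ffun J -> nat}) :
  conv (conv f g) h w = conv f (conv g h) w.
Proof.
set K := bnd w.
have HK : forall p, leV p w -> forall j, (p j <= K)%N.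
  by move=> p /forallP H j; exact: leq_trans (H j) (le_bnd w j).
rewrite !(@convKE _ _ K _ _ w (le_bnd w)) /convK.
under eq_bigr => p lpw do rewrite (convKE _ _ (HK p lpw)) /convK mulr_suml.
rewrite (exchange_big_dep (fun x => leV x w)) /=; last first.
  move=> p x /forallP H1 /forallP H2; apply/forallP => j; exact: leq_trans (H2 j) (H1 j).
apply: eq_bigr => x lxw.
have Hs : forall j, (subV w x j <= K)%N by move=> j; rewrite subVE; exact: leq_trans (leq_subr _ _) (le_bnd w j).
rewrite (convKE _ _ Hs) /convK mulr_sumr.
rewrite (@transl _ _ K x (fun p => leV p w) (fun p => f x * g (subV p x) * h (subV w p))); last first.
  by move=> y /HK H j; move: (H j); rewrite addVE.
apply: eq_big => [y|y _].
  apply/forallP/forallP => H j; move: (H j) (forallP lxw j); rewrite ?addVE ?subVE; nlia.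
by rewrite subV_addVK subV_addV mulrA.
Qed.

Definition delta0 (R : pzSemiRingType) (J : finType) : {ffun J -> nat} -> R :=
  fun x => if [forall j, x j == 0%N] then 1 else 0.

Lemma conv_delta0 (R : pzSemiRingType) (J : finType) (g : {ffun J -> nat} -> R) (w : {ffun J -> nat}) :
  conv (@delta0 R J) g w = g w.
Proof.
set z0 : {ffun J -> nat} := [ffun _ => 0%N].
have Ez : forall x : {ffun J -> nat}, [forall j, x j == 0%N] = (x == z0).
  move=> x; apply/forallP/eqP => [H|->] ; last by move=> j; rewrite ffunE.
  by apply/ffunP => j; rewrite ffunE; apply/eqP.
rewrite /conv /convK big_mkcond.
rewrite (eq_bigr (fun x => if x == z0 then g (subV w x) else 0)); last first.
  move=> x _; rewrite /delta0 Ez; case: eqP => [->|_].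
    by rewrite mul1r ifT //; apply/forallP => j; rewrite ffunE.
  by rewrite mul0r; case: ifP.
rewrite -big_mkcond sum_pred1_seq ?allN_uniq // mem_allN.
rewrite ifT; last by apply/forallP => j; rewrite ffunE.
by congr g; apply/ffunP => j; rewrite subVE ffunE subn0.
Qed.

Definition tr (R : comPzRingType) n (f : ps R n) : {ffun option 'I_n -> nat} -> R :=
  fun x => f (fun k => x (Some k)) (x None).
Definition wv n (u : 'I_n -> nat) (m : nat) : {ffun option 'I_n -> nat} :=
  [ffun o => if o is Some k then u k else m].

Lemma tr_wv (R : comPzRingType) n (f : ps R n) u m : tr f (wv u m) = f u m.
Proof.
rewrite /tr ffunE; congr f; apply: functional_extensionality => k; by rewrite ffunE.
Qed.

Lemma wv_tr n (x : {ffun option 'I_n -> nat}) : wv (fun k => x (Some k)) (x None) = x.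
Proof. by apply/ffunP => -[k|]; rewrite ffunE. Qed.

Lemma psmul_conv (R : comPzRingType) n (f g : ps R n) u m :
  psmul f g u m = conv (tr f) (tr g) (wv u m).
Proof.
rewrite /psmul; set U := (\max_(k < n) u k)%N.
set K := maxn U m.
have HK : forall j, (wv u m j <= K)%N.
  case=> [k|]; rewrite ffunE; last exact: leq_maxr.
  exact: leq_trans (leq_bigmax k) (leq_maxl _ _).
rewrite (convKE _ _ HK) /convK.
set H := fun x => tr f x * tr g (subV (wv u m) x).
set P := fun t : {ffun 'I_n -> 'I_U.+1} => [forall k, (t k <= u k)%N].
set mk := fun (t : {ffun 'I_n -> 'I_U.+1}) (l : nat) => wv (fun k => nat_of_ord (t k)) l.
have E1 : forall (t : {ffun 'I_n -> 'I_U.+1}) l, (l <= m)%N -> f (fun k => nat_of_ord (t k)) l * g (fun k => (u k - t k)%N) (m - l)%N = H (mk t l).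
  move=> t l lm; rewrite /H /mk tr_wv.
  suff -> : subV (wv u m) (wv (fun k => nat_of_ord (t k)) l) = wv (fun k => (u k - t k)%N) (m - l)%N by rewrite tr_wv.
  by apply/ffunP => -[k|]; rewrite subVE !ffunE.
transitivity (\sum_(t <- [seq t <- index_enum {ffun 'I_n -> 'I_U.+1} | P t]) \sum_(l <- iota 0 m.+1) H (mk t l)).
  rewrite big_filter; apply: eq_bigr => t _.
  have -> : iota 0 m.+1 = index_iota 0 m.+1 by rewrite /index_iota subn0.
  rewrite big_mkord; apply: eq_bigr => l _; apply: E1; by rewrite -ltnS.
rewrite -(big_allpairs (F := fun p => H (mk p.1 p.2))) -(big_map (fun p => mk p.1 p.2) xpredT).
rewrite (eq_big_seq (fun x => if leV x (wv u m) then H x else 0)); last first.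
  move=> x /mapP[[t l] /allpairsP[[t' l'] /= [Pt' ll' [-> ->]]] ->] /=.
  rewrite ifT //; apply/forallP => -[k|]; rewrite !ffunE //.
    by move: Pt'; rewrite mem_filter => /andP[/forallP Pt _]; exact: Pt.
  by move: ll'; rewrite -/(iota 0 m.+1) mem_iota add0n ltnS.
rewrite [RHS]big_mkcond; apply: ls_eq; rewrite ?allN_uniq //.
  rewrite map_inj_in_uniq.
    apply: allpairs_uniq; rewrite ?filter_uniq ?index_enum_uniq ?iota_uniq //.
    move=> [t l] [t' l'] _ _ /= /pair_equal_spec[-> ->] //.
  move=> [t l] [t' l'] _ _ /= /ffunP E; congr pair.
    apply/ffunP => k; apply: val_inj; move: (E (Some k)); by rewrite !ffunE.
  by move: (E None); rewrite !ffunE.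
move=> x; case: ifP => [/forallP lx _|]; last by rewrite eqxx.
rewrite mem_allN (_ : [forall j, (x j <= K)%N] = true); last first.
  by apply/forallP => j; exact: leq_trans (lx j) (HK j).
apply/mapP; exists ([ffun k => inord (x (Some k)) : 'I_U.+1], x None); last first.
  by rewrite /mk; apply/ffunP => -[k|]; rewrite !ffunE // inordK // ltnS;
     move: (lx (Some k)) (HK (Some k)); rewrite ffunE => a b; apply: leq_trans a (leq_bigmax k).
apply/allpairsP; exists ([ffun k => inord (x (Some k)) : 'I_U.+1], x None); split => //=.
  rewrite mem_filter mem_index_enum andbT; apply/forallP => k; rewrite ffunE inordK.
    by move: (lx (Some k)); rewrite ffunE.
  by rewrite ltnS; move: (lx (Some k)); rewrite ffunE => a; apply: leq_trans a (leq_bigmax k).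
by rewrite -/(iota 0 m.+1) mem_iota add0n ltnS; move: (lx None); rewrite ffunE.
Qed.

Lemma tr_psmul (R : comPzRingType) n (f g : ps R n) : tr (psmul f g) = conv (tr f) (tr g).
Proof.
apply: functional_extensionality => x; by rewrite {1}/tr psmul_conv wv_tr.
Qed.

Lemma tr_inj (R : comPzRingType) n (f g : ps R n) : tr f = tr g -> f = g.
Proof.
move=> E; apply: functional_extensionality => u; apply: functional_extensionality => m.
by rewrite -!(tr_wv _ u m) E.
Qed.

Lemma psmul_assoc (R : comPzRingType) n (f g h : ps R n) :
  psmul (psmul f g) h = psmul f (psmul g h).
Proof.
apply: tr_inj; rewrite !tr_psmul; apply: functional_extensionality => w; exact: conv_assoc.
Qed.

Lemma tr_psone (R : comPzRingType) n : tr (@psone R n) = @delta0 R _.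
Proof.
apply: functional_extensionality => x; rewrite /tr /psone /delta0.
congr (if _ then _ else _); apply/andP/forallP.
  by move=> [/forallP H1 H2] [k|] //; exact: H1.
by move=> H; split; [apply/forallP => k|]; exact: H.
Qed.

Lemma psone_mul (R : comPzRingType) n (f : ps R n) : psmul (@psone R n) f = f.
Proof.
apply: tr_inj; rewrite tr_psmul tr_psone; apply: functional_extensionality => w; exact: conv_delta0.
Qed.

Lemma pspow_add (R : comPzRingType) n (f : ps R n) a b :
  pspow f (a + b) = psmul (pspow f a) (pspow f b).
Proof.
elim: a => [|a IH]; first by rewrite add0n /= psone_mul.
by rewrite addSn /= IH psmul_assoc.
Qed.

Lemma big_pspow (R : comPzRingType) n (I : Type) (r : seq I) (P : pred I) (e : I -> nat) (f : ps R n) :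
  \big[@psmul R n/@psone R n]_(i <- r | P i) pspow f (e i) = pspow f (\sum_(i <- r | P i) e i)%N.
Proof.
apply: (big_ind2 (fun x k => x = pspow f k)) => //.
by move=> x1 a y1 b -> ->; rewrite pspow_add.
Qed.


Definition psum n (a : 'I_n -> int) : 'I_n -> int := fun k => \sum_(l < n | (l <= k)%N) a l.
Definition ordk n (k : 'I_n) (j : nat) : 'I_n := insubd k j.
Lemma val_ordk n (k : 'I_n) j : (j < n)%N -> nat_of_ord (ordk k j) = j.
Proof. by move=> h; rewrite /ordk val_insubd ifT. Qed.
Lemma ordk_val n (k l : 'I_n) : ordk k l = l.
Proof. exact: valKd. Qed.

Definition Pinv n (b : 'I_n -> int) : 'I_n -> int :=
  fun k => b k - (if (k : nat) is j.+1 then b (ordk k j) else 0).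

Lemma psum_nat n (a : 'I_n -> int) (k k0 : 'I_n) :
  psum a k = \sum_(0 <= l < k.+1) a (ordk k0 l).
Proof.
rewrite big_mkord (big_ord_widen n (fun i => a (ordk k0 i))) ?ltn_ord //.
by rewrite /psum; apply: eq_big => [l|l _] /=; [rewrite ltnS | rewrite ordk_val].
Qed.

Lemma ordk_irr n (k k0 : 'I_n) j : (j < n)%N -> ordk k j = ordk k0 j.
Proof. by move=> h; apply: val_inj; rewrite /= !val_ordk. Qed.

Lemma psum_Pinv n (b : 'I_n -> int) : psum (Pinv b) = b.
Proof.
apply: functional_extensionality => k; rewrite (psum_nat _ _ k).
rewrite (telescope_sumr_eq (fun i => if i is j.+1 then b (ordk k j) else 0)) //.
  by rewrite subr0 ordk_val.
move=> l /andP[_ lk]; have ln : (l < n)%N by exact: leq_trans lk (ltn_ord k).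
rewrite /Pinv val_ordk //; case: l lk ln => [|l] lk ln //.
by rewrite (ordk_irr _ k) // ltnW.
Qed.

Lemma Pinv_psum n (a : 'I_n -> int) : Pinv (psum a) = a.
Proof.
apply: functional_extensionality => k; rewrite /Pinv (psum_nat _ _ k).
case Ek: (nat_of_ord k) => [|j].
  by rewrite big_nat1 -Ek ordk_val subr0.
have jn : (j < n)%N by rewrite ltnW // -Ek ltn_ord.
rewrite (psum_nat _ _ k) big_nat_recr //= val_ordk // .
by rewrite addrC addrK -Ek ordk_val.
Qed.

Lemma psum_inj n (a a' : 'I_n -> int) : psum a = psum a' -> a = a'.
Proof. by move=> E; rewrite -(Pinv_psum a) E Pinv_psum. Qed.

Lemma psumB n (a a' : 'I_n -> int) k : psum a k - psum a' k = psum (fun l => a l - a' l) k.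
Proof. by rewrite /psum sumrB. Qed.

Lemma psumD n (a a' : 'I_n -> int) k : psum a k + psum a' k = psum (fun l => a l + a' l) k.
Proof. by rewrite /psum big_split. Qed.

Lemma psum0 n : psum (fun _ : 'I_n => 0 : int) = (fun _ => 0).
Proof. by apply: functional_extensionality => k; rewrite /psum big1. Qed.

Definition emb n (sg : 'I_n -> bool) (v : {ffun 'I_n -> nat}) : {ffun 'I_n -> int} :=
  [ffun k => if sg k then (v k)%:Z else - (v k)%:Z].
Definition incone n (sg : 'I_n -> bool) (a : 'I_n -> int) :=
  [forall k, if sg k then 0 <= a k else a k <= 0].
Definition wf (R : comPzRingType) n (F : laur R n) :=
  forall (b : 'I_n -> int) k, b k < lb F -> lco F b = 0.
Definition cone (R : comPzRingType) n (sg : 'I_n -> bool) (F : laur R n) :=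
  forall a, ~~ incone sg a -> qcoef F a = 0.

Lemma wf_qmul (R : comPzRingType) n (F G : laur R n) : wf F -> wf G -> wf (qmul F G).
Proof.
move=> wF wG b k /= Hb; rewrite big1 // => t /forallP /(_ k) H.
have : (0 <= (t k)%:Z) by [].
move: H Hb; move: ((t k)%:Z) => w; lia.
Qed.

Lemma qmul_terms (R : comPzRingType) n (F G : laur R n) (c : 'I_n -> int) (LL : seq {ffun 'I_n -> int}) :
  wf F -> wf G -> uniq LL ->
  (forall b : {ffun 'I_n -> int}, lco F b * lco G (fun k => c k - b k) != 0 -> b \in LL) ->
  lco (qmul F G) c = \sum_(b <- LL) lco F b * lco G (fun k => c k - b k).
Proof.
move=> wF wG uL HL /=.
set M := (\max_(k < n) absz (c k - lb F - lb G)%R)%N.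
set mkb := fun t : {ffun 'I_n -> 'I_M.+1} => [ffun k => lb F + (t k)%:Z].
set h := fun b : {ffun 'I_n -> int} => lco F b * lco G (fun k => c k - b k).
transitivity (\sum_(t <- index_enum {ffun 'I_n -> 'I_M.+1}) h (mkb t)).
  rewrite big_mkcond; apply: eq_bigr => t _.
  have E1 : (fun k => lb F + (t k)%:Z) = mkb t :> ('I_n -> int).
    by apply: functional_extensionality => k; rewrite ffunE.
  rewrite /h -E1; case: ifP => // /negbT; rewrite negb_forall => /existsP[k Hk].
  by rewrite (wG _ k) ?mulr0 // ltNge.
rewrite -(big_map mkb xpredT h); apply: ls_eq => //.
  rewrite map_inj_uniq ?index_enum_uniq // => t t' /ffunP E; apply/ffunP => k.
  apply: val_inj; move: (E k); rewrite !ffunE => /addrI; by case.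
move=> b hb; rewrite HL //; apply/mapP.
have hF : lco F b != 0 by apply: contraNneq hb => E; rewrite /h E mul0r.
have hG : lco G (fun k => c k - b k) != 0 by apply: contraNneq hb => E; rewrite /h E mulr0.
have B1 : forall k, lb F <= b k.
  by move=> k; rewrite leNgt; apply/negP => /wF E; rewrite E eqxx in hF.
have B2 : forall k, lb G <= c k - b k.
  by move=> k; rewrite leNgt; apply/negP => E; rewrite (wG _ k E) eqxx in hG.
have B3 : forall k, (absz (b k - lb F) <= M)%N.
  move=> k; apply: leq_trans (leq_bigmax k); move: (B1 k) (B2 k).
  by move: (lb F) (lb G) (b k) (c k) => x y z w; lia.
exists [ffun k => inord (absz (b k - lb F)) : 'I_M.+1]; first by rewrite mem_index_enum.
apply/ffunP => k; rewrite !ffunE inordK ?ltnS //; move: (B1 k).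
by move: (lb F) (b k) => x y; lia.
Qed.

Lemma qcoefE (R : comPzRingType) n (F : laur R n) a : qcoef F a = lco F (psum a).
Proof. by []. Qed.
Lemma lcoE (R : comPzRingType) n (F : laur R n) b : lco F b = qcoef F (Pinv b).
Proof. by rewrite qcoefE psum_Pinv. Qed.

Lemma inconeP n (sg : 'I_n -> bool) a k : incone sg a -> if sg k then 0 <= a k else a k <= 0.
Proof. by move/forallP. Qed.

Lemma incone_add n (sg : 'I_n -> bool) a a' :
  incone sg a -> incone sg a' -> incone sg (fun k => a k + a' k).
Proof.
move=> /forallP H /forallP H'; apply/forallP => k; move: (H k) (H' k).
by case: (sg k) => /=; lia.
Qed.

Lemma qmul_split (R : comPzRingType) n (F G : laur R n) (a : 'I_n -> int) (b : 'I_n -> int) :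
  lco F b * lco G (fun k => psum a k - b k) =
  qcoef F (Pinv b) * qcoef G (fun k => a k - Pinv b k).
Proof.
rewrite lcoE !qcoefE; congr (_ * lco G _).
by apply: functional_extensionality => k; rewrite -psumB psum_Pinv.
Qed.

Lemma cone_qmul (R : comPzRingType) n sg (F G : laur R n) :
  wf F -> wf G -> cone sg F -> cone sg G -> cone sg (qmul F G).
Proof.
move=> wF wG cF cG a Ha; rewrite qcoefE (@qmul_terms _ _ _ _ _ [::]) ?big_nil //.
move=> b; rewrite qmul_split.
case: (boolP (incone sg (Pinv b))) => [H1|H1]; last by rewrite cF // mul0r eqxx.
case: (boolP (incone sg (fun k => a k - Pinv b k))) => [H2|H2]; last by rewrite (cG _ H2) mulr0 eqxx.
have := incone_add H1 H2.
have -> : (fun k => Pinv b k + (a k - Pinv b k)) = a.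
  by apply: functional_extensionality => k; rewrite addrC subrK.
by rewrite (negbTE Ha).
Qed.

Lemma emb_abs n (sg : 'I_n -> bool) (v : {ffun 'I_n -> nat}) (a1 : 'I_n -> int) k :
  incone sg a1 -> incone sg (fun k => emb sg v k - a1 k) ->
  (absz (a1 k) <= v k)%N /\ emb sg [ffun k => absz (a1 k)] k = a1 k.
Proof.
move=> /forallP/(_ k) H1 /forallP/(_ k); rewrite !ffunE.
case: (sg k) H1 => /= H1 H2; split; move: H1 H2; nlia.
Qed.

Definition psf n (a : 'I_n -> int) : {ffun 'I_n -> int} := [ffun k => psum a k].

Lemma emb_inj n (sg : 'I_n -> bool) : injective (emb sg).
Proof.
move=> v v' /ffunP E; apply/ffunP => k; move: (E k); rewrite !ffunE.
case: (sg k) => /=; nlia.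
Qed.

Lemma psf_emb_inj n (sg : 'I_n -> bool) : injective (fun v => psf (emb sg v)).
Proof.
move=> v v' /ffunP E; apply: emb_inj; apply/ffunP => k.
have : psum (emb sg v) = psum (emb sg v').
  by apply: functional_extensionality => l; move: (E l); rewrite !ffunE.
by move/psum_inj => E2; exact: (congr1 (fun f => f k) E2).
Qed.

Definition sgf (R : comPzRingType) n (sg : 'I_n -> bool) (F : laur R n) :=
  fun v : {ffun 'I_n -> nat} => qcoef F (emb sg v).

Lemma qmul_sigma (R : comPzRingType) n sg (F G : laur R n) :
  wf F -> wf G -> cone sg F -> cone sg G ->
  sgf sg (qmul F G) = conv (sgf sg F) (sgf sg G).
Proof.
move=> wF wG cF cG; apply: functional_extensionality => v.
rewrite /sgf {1}qcoefE /conv /convK.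
rewrite (@qmul_terms _ _ _ _ _ [seq psf (emb sg v1) | v1 <- allN _ (bnd v) & leV v1 v]) //.
- rewrite big_map big_filter; apply: eq_bigr => v1 /forallP lv1.
  rewrite qcoefE qcoefE; congr (lco F _ * lco G _).
    by apply: functional_extensionality => k; rewrite ffunE.
  apply: functional_extensionality => k; rewrite ffunE psumB; congr psum.
  apply: functional_extensionality => l; rewrite !ffunE; move: (lv1 l).
  by case: (sg l); nlia.
- rewrite map_inj_uniq ?filter_uniq ?allN_uniq //; exact: psf_emb_inj.
move=> b; rewrite qmul_split.
case: (boolP (incone sg (Pinv b))) => [H1|H1]; last by rewrite cF // mul0r eqxx.
case: (boolP (incone sg (fun k => emb sg v k - Pinv b k))) => [H2|H2]; last by rewrite (cG _ H2) mulr0 eqxx.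
move=> _; apply/mapP; exists [ffun k => absz (Pinv b k)].
  rewrite mem_filter mem_allN; apply/andP; split; apply/forallP => k; rewrite ffunE;
    have [h _] := emb_abs k H1 H2 => //.
  exact: leq_trans h (le_bnd v k).
apply/ffunP => k; rewrite ffunE.
have -> : emb sg [ffun k => absz (Pinv b k)] = Pinv b :> ('I_n -> int).
  by apply: functional_extensionality => l; have [_ ->] := emb_abs l H1 H2.
by rewrite psum_Pinv.
Qed.

Definition piS n (sg : 'I_n -> bool) (v : {ffun 'I_n -> nat}) : {ffun option 'I_n -> nat} :=
  [ffun o => if o is Some k then (if sg k then v k else 0%N) else (\sum_(k | ~~ sg k) v k)%N].

Definition push (R : comPzRingType) n (sg : 'I_n -> bool) (h : {ffun 'I_n -> nat} -> R)
  (w : {ffun option 'I_n -> nat}) := \sum_(v <- allN 'I_n (bnd w) | piS sg v == w) h v.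

Lemma le_sum_not n (sg : 'I_n -> bool) (v : {ffun 'I_n -> nat}) k :
  ~~ sg k -> (v k <= \sum_(k | ~~ sg k) v k)%N.
Proof. by move=> h; rewrite (bigD1 k) //= leq_addr. Qed.

Lemma piS_le n (sg : 'I_n -> bool) (v : {ffun 'I_n -> nat}) k :
  (v k <= if sg k then piS sg v (Some k) else piS sg v None)%N.
Proof.
rewrite !ffunE; case E: (sg k) => //; apply: le_sum_not; by rewrite E.
Qed.

Lemma piS_bndK n (sg : 'I_n -> bool) (v : {ffun 'I_n -> nat}) (w : {ffun option 'I_n -> nat}) K :
  piS sg v = w -> (forall j, w j <= K)%N -> forall k, (v k <= K)%N.
Proof.
move=> E HK k; apply: leq_trans (piS_le sg v k) _; rewrite E; by case: (sg k).
Qed.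

Lemma pushKE (R : comPzRingType) n (sg : 'I_n -> bool) h (w : {ffun option 'I_n -> nat}) K :
  (forall j, w j <= K)%N -> push sg h w = \sum_(v <- allN 'I_n K | piS sg v == w) h v :> R.
Proof.
move=> HK; rewrite /push big_mkcond [RHS]big_mkcond; apply: ls_eq; rewrite ?allN_uniq //.
move=> v; case: ifP => [/eqP E _|]; last by rewrite eqxx.
have H1 : [forall k, (v k <= bnd w)%N] by apply/forallP => k; exact: piS_bndK E (le_bnd w) k.
have H2 : [forall k, (v k <= K)%N] by apply/forallP => k; exact: piS_bndK E HK k.
by rewrite !mem_allN H1 H2.
Qed.

Lemma piS_add n (sg : 'I_n -> bool) (v1 v2 : {ffun 'I_n -> nat}) : piS sg (addV v1 v2) = addV (piS sg v1) (piS sg v2).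
Proof.
apply/ffunP => -[k|]; rewrite !ffunE; first by case: (sg k); rewrite ?addVE.
by rewrite -big_split; apply: eq_bigr => k _; rewrite addVE.
Qed.

Lemma leV_K (J : finType) (p w : {ffun J -> nat}) K :
  leV p w -> (forall j, w j <= K)%N -> forall j, (p j <= K)%N.
Proof. by move=> /forallP H HK j; exact: leq_trans (H j) (HK j). Qed.
Lemma subV_K (J : finType) (p w : {ffun J -> nat}) K :
  (forall j, w j <= K)%N -> forall j, (subV w p j <= K)%N.
Proof. by move=> HK j; rewrite subVE; exact: leq_trans (leq_subr _ _) (HK j). Qed.

Lemma push_conv (R : comPzRingType) n (sg : 'I_n -> bool) (h1 h2 : {ffun 'I_n -> nat} -> R) (w : {ffun option 'I_n -> nat}) :
  push sg (conv h1 h2) w = conv (push sg h1) (push sg h2) w.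
Proof.
set K := bnd w.
have HK : forall j, (w j <= K)%N by exact: le_bnd.
transitivity (\sum_(v1 <- allN 'I_n K) \sum_(v2 <- allN 'I_n K | piS sg (addV v1 v2) == w) h1 v1 * h2 v2).
  rewrite (pushKE _ _ HK).
  under eq_bigr => v /eqP Ev do rewrite (convKE _ _ (piS_bndK Ev HK)) /convK.
  rewrite (exchange_big_dep xpredT) //=; apply: eq_bigr => v1 _.
  rewrite (@transl _ _ K v1 (fun v => piS sg v == w) (fun v => h1 v1 * h2 (subV v v1))); last first.
    by move=> y /eqP E j; move: (piS_bndK E HK j); rewrite addVE.
  by apply: eq_bigr => v2 _; rewrite subV_addVK.
symmetry; rewrite /conv -/K /convK.
under eq_bigr => p lp do rewrite (pushKE _ _ (leV_K lp HK)) (pushKE _ _ (subV_K p HK)) mulr_suml.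
under eq_bigr => p _ do under eq_bigr do rewrite mulr_sumr.
rewrite (exchange_big_dep xpredT) //=; symmetry; apply: eq_bigr => v1 _.
case: (boolP (leV (piS sg v1) w)) => [lv|nlv].
  rewrite (eq_bigl (fun p => p == piS sg v1)); last first.
    move=> p; apply/andP/eqP => [[_ /eqP ->]|->] //; split => //.
  rewrite sum_pred1_seq ?allN_uniq // mem_allN ifT; last first.
    by apply/forallP => j; exact: leq_trans (forallP lv j) (HK j).
  apply: eq_bigl => v2; rewrite piS_add; apply/eqP/eqP => [<-|->].
    by apply/ffunP => j; rewrite subVE addVE addKn.
  by apply/ffunP => j; rewrite addVE subVE subnKC //; exact: (forallP lv j).
rewrite big_pred0; last first.
  move=> v2; apply/negP => /eqP E; move: nlv; rewrite -E piS_add.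
  by move/negP; apply; apply/forallP => j; rewrite addVE leq_addr.
rewrite big_pred0 //.
by move=> p; apply/negP => /andP[lp /eqP E]; move: nlv; rewrite E lp.
Qed.

Lemma sum_not_sg n (sg : 'I_n -> bool) (s : 'I_n -> nat) :
  (forall k, sg k -> s k = 0%N) -> (\sum_(k < n) s k = \sum_(k | ~~ sg k) s k)%N.
Proof.
move=> H; rewrite [RHS]big_mkcond; apply: eq_bigr => k _.
by case E: (sg k) => //=; rewrite H.
Qed.

Lemma trB (R : comPzRingType) n (sg : 'I_n -> bool) (F : laur R n) :
  cone sg F -> tr (B F) = push sg (sgf sg F).
Proof.
move=> cF; apply: functional_extensionality => x.
rewrite /tr /B /push /sgf.
set u := fun k => x (Some k); set m := x None.
set Ps := fun s : {ffun 'I_n -> 'I_m.+1} => ((\sum_(k < n) (s k : nat))%N == m) && [forall k, (0 < s k)%N ==> (u k == 0%N)].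
set mka := fun s : {ffun 'I_n -> 'I_m.+1} => [ffun k => (u k)%:Z - (s k : nat)%:Z].
transitivity (\sum_(a <- [seq mka s | s <- index_enum {ffun 'I_n -> 'I_m.+1} & Ps s]) qcoef F a).
  rewrite big_map big_filter; apply: eq_bigr => s _; congr qcoef.
  by apply: functional_extensionality => k; rewrite ffunE.
rewrite -[RHS](big_filter) -(big_map (emb sg) xpredT (fun a : {ffun 'I_n -> int} => qcoef F a)).
apply: ls_eq.
- rewrite map_inj_uniq ?filter_uniq ?index_enum_uniq // => s s' /ffunP E.
  apply/ffunP => k; apply: val_inj; move: (E k); rewrite !ffunE /=; lia.
- rewrite map_inj_uniq ?filter_uniq ?allN_uniq //; exact: emb_inj.
move=> a Ha.
have ca : incone sg a by apply: contraNT Ha => /cF ->.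
apply/mapP/mapP => -[w Hw Ea]; subst a.
- move: Hw; rewrite mem_filter => /andP[/andP[/eqP Hs /forallP Hc] _].
  have Hk : forall k, (if sg k then (w k : nat) = 0%N else u k = 0%N).
    move=> k; move: (Hc k) (inconeP k ca); rewrite /mka ffunE.
    move: (nat_of_ord (w k)) (u k) => wk uk; case: (sg k); case: wk => [|wk] /=.
    - by [].
    - by move=> /eqP ->; lia.
    - by move=> _; lia.
    - by move=> /eqP ->.
  exists [ffun k => if sg k then u k else (w k : nat)].
    rewrite mem_filter mem_allN; apply/andP; split.
      apply/eqP/ffunP => -[k|]; rewrite !ffunE.
        by move: (Hk k); case: (sg k) => // ->.
      apply: (etrans _ Hs).
      rewrite (@sum_not_sg _ sg (fun k => (w k : nat))); last by move=> k Sk; move: (Hk k); rewrite Sk.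
      by apply: eq_bigr => k Sk; rewrite ffunE (negbTE Sk).
    apply/forallP => k; rewrite ffunE; case: (sg k).
      exact: (le_bnd x (Some k)).
    have : ((w k : nat) <= \sum_(k < n) (w k : nat))%N by rewrite (bigD1 k) //= leq_addr.
    rewrite Hs => h; exact: leq_trans h (le_bnd x None).
  apply/ffunP => k; rewrite !ffunE; move: (Hk k); case: (sg k) => [->|->]; by rewrite ?subr0 ?sub0r.
- move: Hw; rewrite mem_filter => /andP[/eqP Hx _].
  have Hv : forall k, ~~ sg k -> (w k <= m)%N.
    by move=> k Sk; rewrite /m -Hx ffunE; exact: le_sum_not.
  exists [ffun k => inord (if sg k then 0%N else w k) : 'I_m.+1].
    rewrite mem_filter mem_index_enum andbT; apply/andP; split.
      apply/eqP; rewrite /m -Hx ffunE (@sum_not_sg _ sg); last first.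
        by move=> k Sk; rewrite ffunE Sk inordK.
      apply: eq_bigr => k Sk; rewrite ffunE (negbTE Sk) inordK // ltnS; exact: le_sum_not.
    apply/forallP => k; rewrite ffunE; case E: (sg k); first by rewrite inordK.
    apply/implyP => _; rewrite /u; have := Hx; move=> /ffunP/(_ (Some k)); rewrite ffunE E => <-//.
  apply/ffunP => k; rewrite !ffunE /u -Hx !ffunE.
  case E: (sg k); first by rewrite inordK // subr0.
  rewrite inordK ?ltnS ?Hv ?E //; by rewrite sub0r.
Qed.


Lemma B_qmul (R : comPzRingType) n (sg : 'I_n -> bool) (F G : laur R n) :
  wf F -> wf G -> cone sg F -> cone sg G -> B (qmul F G) = psmul (B F) (B G).
Proof.
move=> wF wG cF cG; apply: tr_inj; rewrite tr_psmul (trB cF) (trB cG) (trB (cone_qmul wF wG cF cG)) qmul_sigma //.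
apply: functional_extensionality => w; exact: push_conv.
Qed.

Definition good (R : comPzRingType) n (sg : 'I_n -> bool) (F : laur R n) := wf F /\ cone sg F.

Lemma good_qmul (R : comPzRingType) n (sg : 'I_n -> bool) (F G : laur R n) :
  good sg F -> good sg G -> good sg (qmul F G).
Proof. by move=> [wF cF] [wG cG]; split; [exact: wf_qmul | exact: cone_qmul]. Qed.

Definition dlt n (i : 'I_n) : 'I_n -> int := fun k => if k == i then 1 else 0.

Lemma psum_dlt n (i k : 'I_n) : psum (dlt i) k = if (i <= k)%N then 1 else 0.
Proof.
rewrite /psum /dlt -big_mkcondr /=.
case: ifP => ik.
  by rewrite (big_pred1 i) // => l; apply/andP/eqP => [[_ /eqP]|->] //.
by rewrite big_pred0 // => l; apply/andP => -[lk /eqP E]; rewrite -E lk in ik.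
Qed.

Lemma forall_psum n (a d : 'I_n -> int) : [forall k, psum a k == psum d k] = [forall k, a k == d k].
Proof.
apply/forallP/forallP => H k.
  have E : psum a = psum d by apply: functional_extensionality => l; apply/eqP.
  by rewrite (psum_inj E).
by have -> : a = d by apply: functional_extensionality => l; apply/eqP.
Qed.

Lemma psum0' n (a : 'I_n -> int) : [forall k, psum a k == 0] = [forall k, a k == 0].
Proof. by rewrite -(forall_psum a (fun _ => 0)) psum0. Qed.

Lemma good_qone (R : comPzRingType) n (sg : 'I_n -> bool) : good sg (qone R n).
Proof.
split.
  move=> b k /= bk; case: ifP => // /forallP/(_ k)/eqP E; by rewrite E in bk.
move=> a Ha; rewrite qcoefE /= psum0'; case: ifP => // /forallP H.
by move: Ha; apply: contraNeq => _; apply/forallP => k; rewrite (eqP (H k)); case: (sg k).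
Qed.

Lemma push_pt (R : comPzRingType) n (sg : 'I_n -> bool) (v0 : {ffun 'I_n -> nat}) (c : R) w :
  push sg (fun v => if v == v0 then c else 0) w = if piS sg v0 == w then c else 0.
Proof.
rewrite /push -big_mkcondr /=.
case: ifP => Hw.
  rewrite (eq_bigl (fun v => v == v0)); last first.
    by move=> v; apply/andP/eqP => [[_ /eqP]|->] //.
  rewrite sum_pred1_seq ?allN_uniq // mem_allN ifT //.
  apply/forallP => k; exact: piS_bndK (eqP Hw) (le_bnd w) k.
rewrite big_pred0 // => v; apply/andP => -[E /eqP E2]; by rewrite -E2 E in Hw.
Qed.

Lemma pushD (R : comPzRingType) n (sg : 'I_n -> bool) (h1 h2 : {ffun 'I_n -> nat} -> R) w :
  push sg (fun v => h1 v + h2 v) w = push sg h1 w + push sg h2 w.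
Proof. exact: big_split. Qed.

Lemma pushZ (R : comPzRingType) n (sg : 'I_n -> bool) (h : {ffun 'I_n -> nat} -> R) c w :
  push sg (fun v => c * h v) w = c * push sg h w.
Proof. by rewrite /push mulr_sumr. Qed.

Lemma sgf_qone (R : comPzRingType) n (sg : 'I_n -> bool) v :
  sgf sg (qone R n) v = if v == [ffun _ => 0%N] then 1 else 0.
Proof.
rewrite /sgf qcoefE /= psum0'; congr (if _ then _ else _).
apply/forallP/eqP => [H|->].
  by apply/ffunP => k; move: (H k); rewrite !ffunE; case: (sg k); nlia.
by move=> k; rewrite !ffunE; case: (sg k).
Qed.

Lemma piS0 n (sg : 'I_n -> bool) : piS sg [ffun _ => 0%N] = [ffun _ => 0%N].
Proof.
apply/ffunP => -[k|]; rewrite !ffunE; first by case: (sg k); rewrite ?ffunE.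
by rewrite big1 // => k _; rewrite ffunE.
Qed.

Lemma B_qone (R : comPzRingType) n (sg : 'I_n -> bool) : B (qone R n) = @psone R n.
Proof.
apply: tr_inj; rewrite (trB (good_qone R sg).2) tr_psone.
apply: functional_extensionality => w.
rewrite (_ : sgf sg (qone R n) = fun v => if v == [ffun _ => 0%N] then 1 else 0); last first.
  by apply: functional_extensionality => v; rewrite sgf_qone.
rewrite push_pt piS0 /delta0; congr (if _ then _ else _).
apply/eqP/forallP => [<- j|H]; first by rewrite ffunE.
by apply/ffunP => j; rewrite ffunE; apply/esym/eqP.
Qed.

Lemma good_qpow (R : comPzRingType) n (sg : 'I_n -> bool) (F : laur R n) k :
  good sg F -> good sg (qpow F k) /\ B (qpow F k) = pspow (B F) k.
Proof.
move=> gF; elim: k => [|k [gk Bk]] /=; first by split; [exact: good_qone | exact: B_qone].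
split; first exact: good_qmul.
by rewrite (B_qmul gF.1 gk.1 gF.2 gk.2) -Bk.
Qed.

Lemma wf_qadd (R : comPzRingType) n (F G : laur R n) : wf F -> wf G -> wf (qadd F G).
Proof.
move=> wF wG b k /= H.
have [H1 H2] : b k < lb F /\ b k < lb G.
  by move: H; case: ifP => [/idP h|/negbT h] H; split; lia.
by rewrite (wF b k H1) (wG b k H2) addr0.
Qed.

Lemma wf_qscale (R : comPzRingType) n c (F : laur R n) : wf F -> wf (qscale c F).
Proof. by move=> wF b k /= H; rewrite (wF b k) ?mulr0. Qed.

Lemma wf_qmon (R : comPzRingType) n (e : 'I_n -> int) : wf (qmon R e).
Proof.
move=> b k /= H; case: ifP => // /forallP/(_ k)/eqP E.
have : (absz (e k) <= \sum_(k < n) absz (e k))%N by rewrite (bigD1 k) //= leq_addr.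
by move: H; rewrite E; move: (\sum_(k < n) absz (e k))%N => s; lia.
Qed.

Lemma ffun_opt_eq n (x y : {ffun option 'I_n -> nat}) :
  (x == y) = [forall k, x (Some k) == y (Some k)] && (x None == y None).
Proof.
apply/eqP/andP => [->|[/forallP H /eqP H2]]; first by split => //; apply/forallP.
by apply/ffunP => -[k|] //; apply/eqP.
Qed.

Definition ev n (i : 'I_n) : {ffun 'I_n -> nat} := [ffun k => (k == i : nat)].

Lemma emb_dlt n (sg : 'I_n -> bool) (i : 'I_n) v (s : bool) :
  sg i = s -> [forall k, emb sg v k == (if s then dlt i k else - dlt i k)] = (v == ev i).
Proof.
move=> Si; apply/forallP/eqP => [H|-> k].
  apply/ffunP => k; move: (H k); rewrite !ffunE /dlt; clear H.
  case: (eqVneq k i) => [->|_]; rewrite ?Si; case: s {Si}; case: (sg k) => /eqP; nlia.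
rewrite !ffunE /dlt; case: (eqVneq k i) => [->|_]; rewrite ?Si; case: s {Si}; by case: (sg k).
Qed.

Lemma piS_ev n (sg : 'I_n -> bool) (i : 'I_n) w :
  (piS sg (ev i) == w) =
  [forall k, w (Some k) == if sg i then (k == i : nat) else 0%N] && (w None == if sg i then 0%N else 1%N).
Proof.
rewrite ffun_opt_eq; congr (_ && _).
  apply: eq_forallb => k; rewrite !ffunE eq_sym; case: (eqVneq k i) => [->|ne] //=.
  by case: (sg k); case: (sg i).
rewrite ffunE big_mkcond (bigD1 i) //= big1 => [|k ne]; last by rewrite ffunE (negbTE ne); case: ifP.
rewrite ffunE eqxx addn0 eq_sym; by case: (sg i).
Qed.

Lemma q_exp_psum n (i : 'I_n) : q_exp i = psum (dlt i).
Proof. by apply: functional_extensionality => k; rewrite psum_dlt. Qed.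

Lemma qinv_exp_psum n (j : 'I_n) : qinv_exp j = psum (fun l => - dlt j l).
Proof.
apply: functional_extensionality => k.
by rewrite /psum sumrN -/(psum (dlt j) k) psum_dlt /qinv_exp; case: ifP.
Qed.

Lemma emb0 n (sg : 'I_n -> bool) v : [forall k, emb sg v k == 0] = (v == [ffun _ => 0%N]).
Proof.
apply/forallP/eqP => [H|-> k].
  by apply/ffunP => k; move: (H k); rewrite !ffunE; case: (sg k); nlia.
by rewrite !ffunE; case: (sg k).
Qed.

Lemma ifZ (R : comPzRingType) (c : bool) (x : R) : (if c then x else 0) = x * (if c then 1 else 0).
Proof. by case: c; rewrite ?mulr1 ?mulr0. Qed.

Section NumA.
Variables (R : comPzRingType) (n : nat) (beta alpha : R) (i j : 'I_n) (sg : 'I_n -> bool).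
Hypotheses (Si : sg i = true) (Sj : sg j = false).

Lemma lco_numA b : lco (numA beta alpha i j) b =
  -1 * ((if [forall k, b k == q_exp i k] then 1 else 0) +
        (beta * (if [forall k, b k == 0] then 1 else 0) +
         alpha * (if [forall k, b k == qinv_exp j k] then 1 else 0))).
Proof. by []. Qed.

Lemma good_numA : good sg (numA beta alpha i j).
Proof.
split.
  apply: wf_qscale; apply: wf_qadd; first exact: wf_qmon.
  apply: wf_qadd; apply: wf_qscale; [exact: (good_qone R sg).1 | exact: wf_qmon].
move=> a Ha; rewrite qcoefE lco_numA q_exp_psum qinv_exp_psum !forall_psum psum0'.
have X : forall d : 'I_n -> int, incone sg d -> [forall k, a k == d k] = false.
  move=> d Hd; apply/negP => /forallP H; move: Ha; rewrite (_ : a = d) ?Hd //.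
  by apply: functional_extensionality => k; apply/eqP.
rewrite X; last by apply/forallP => k; rewrite /dlt; case: (eqVneq k i) => [->|_]; rewrite ?Si ?eqxx //; case: (sg k).
rewrite X; last by apply/forallP => k; case: (sg k).
rewrite X; last by apply/forallP => k; rewrite /dlt; case: (eqVneq k j) => [->|_]; rewrite ?Sj ?eqxx //; case: (sg k).
by rewrite !mulr0 !addr0 mulr0.
Qed.

Lemma B_numA : B (numA beta alpha i j) = numE beta alpha i.
Proof.
apply: tr_inj; rewrite (trB good_numA.2); apply: functional_extensionality => w.
rewrite (_ : sgf sg (numA beta alpha i j) = fun v =>
   -1 * ((if v == ev i then 1 else 0) + (beta * (if v == [ffun _ => 0%N] then 1 else 0) +
          alpha * (if v == ev j then 1 else 0)))); last first.
  apply: functional_extensionality => v.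
  rewrite /sgf qcoefE lco_numA q_exp_psum qinv_exp_psum !forall_psum psum0' emb0.
  rewrite -(emb_dlt v Si) -(emb_dlt v Sj) //.
rewrite pushZ !pushD !pushZ !push_pt piS0 !piS_ev Si Sj ffun_opt_eq /tr /numE.
rewrite (ifZ _ beta) (ifZ _ alpha) mulN1r !addrA.
congr (- (_ + beta * (if _ then _ else _) + _)); congr (_ && _); [apply: eq_forallb => k|]; by rewrite ffunE eq_sym.
Qed.

End NumA.

Section GeomA.
Variables (R : comPzRingType) (n : nat) (i j : 'I_n) (sg : 'I_n -> bool).
Hypotheses (Si : sg i = true) (Sj : sg j = false) (ij : (i < j)%N).

Let ne : i != j.
Proof. by apply/eqP => E; move: ij; rewrite E ltnn. Qed.
Let ne' : j != i.
Proof. by rewrite eq_sym ne. Qed.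

Definition gvec (c : int) : 'I_n -> int := fun k => c * dlt i k - c * dlt j k.

Lemma psum_gvec c k : psum (gvec c) k = if (i <= k < j)%N then c else 0.
Proof.
rewrite /gvec -psumB /psum -!mulr_sumr -/(psum (dlt i) k) -/(psum (dlt j) k) !psum_dlt.
have [ik|ki] := leqP i k; have [jk|kj] := leqP j k => /=.
- by rewrite subrr.
- by rewrite mulr1 mulr0 subr0.
- by move: ij ki jk; lia.
- by rewrite !mulr0 subrr.
Qed.

Lemma lco_geomA b : lco (geomA R i j) b =
  if [forall k, b k == psum (gvec (b i)) k] && (0 <= b i) then 1 else 0.
Proof.
rewrite /=; congr (if _ then _ else _); congr (_ && _).
by apply: eq_forallb => k; rewrite psum_gvec.
Qed.

Lemma good_geomA : good sg (geomA R i j).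
Proof.
split.
  move=> b k /= H; case: ifP => // /andP[/forallP/(_ k)/eqP E H2].
  by move: H; rewrite E; case: ifP => _; lia.
move=> a Ha; rewrite qcoefE lco_geomA forall_psum; case: ifP => // /andP[/forallP H H2].
move: Ha; rewrite (_ : a = gvec (psum a i)); last first.
  by apply: functional_extensionality => k; apply/eqP.
move: (psum a i) H2 => c H2; apply: contraNeq => _; apply/forallP => k.
rewrite /gvec /dlt; case: (eqVneq k i) => [->|ki]; first by rewrite Si (negbTE ne) mulr1 mulr0 subr0.
case: (eqVneq k j) => [->|kj]; first by rewrite Sj mulr1 mulr0 sub0r oppr_le0.
by rewrite !mulr0 subr0; case: (sg k).
Qed.

Definition gv (c : nat) : {ffun 'I_n -> nat} := [ffun k => if (k == i) || (k == j) then c else 0%N].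

Lemma emb_gv c k : emb sg (gv c) k = gvec c%:Z k.
Proof.
rewrite !ffunE /gvec /dlt; case: (eqVneq k i) => [->|ki]; first by rewrite Si (negbTE ne) mulr1 mulr0 subr0.
case: (eqVneq k j) => [->|kj]; first by rewrite Sj mulr1 mulr0 sub0r.
by rewrite !mulr0 subr0; case: (sg k).
Qed.

Lemma sgf_geomA v : sgf sg (geomA R i j) v = if v == gv (v i) then 1 else 0.
Proof.
rewrite /sgf qcoefE lco_geomA forall_psum; congr (if _ then _ else _).
apply/andP/eqP => [[/forallP H _]|E].
  have Ei : psum (emb sg v) i = (v i)%:Z.
    move: (H i); rewrite ffunE Si /gvec /dlt eqxx (negbTE ne) mulr1 mulr0 subr0.
    by move/eqP.
  apply/ffunP => k; move: (H k); rewrite Ei !ffunE /gvec /dlt.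
  case: (eqVneq k i) => [->|ki] //=.
  case: (eqVneq k j) => [->|kj] /=; first by rewrite Sj mulr1 mulr0 sub0r => /eqP; nlia.
  by rewrite !mulr0 subr0; case: (sg k) => /eqP; nlia.
have Ee : (emb sg v : 'I_n -> int) = gvec (v i)%:Z.
  by apply: functional_extensionality => k; rewrite {1}E emb_gv.
have -> : psum (emb sg v) i = (v i)%:Z.
  by rewrite Ee psum_gvec leqnn ij.
split => //; apply/forallP => k; by rewrite -Ee.
Qed.

Lemma piS_gv c : piS sg (gv c) = [ffun o => if o is Some k then (if k == i then c else 0%N) else c].
Proof.
apply/ffunP => -[k|]; rewrite !ffunE.
  case: (eqVneq k i) => [->|ki]; first by rewrite Si /= ?eqxx.
  case: (eqVneq k j) => [->|kj]; first by rewrite Sj.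
  by case: (sg k).
rewrite big_mkcond (bigD1 j) //= Sj ffunE eqxx orbT big1 ?addn0 // => k kj.
case: (boolP (sg k)) => //= Sk; rewrite ffunE (negbTE kj) orbF; case: (eqVneq k i) => // Eki.
by move: Sk; rewrite Eki Si.
Qed.

Lemma B_geomA : B (geomA R i j) = geomE R i.
Proof.
apply: tr_inj; rewrite (trB good_geomA.2); apply: functional_extensionality => w.
rewrite /push.
rewrite (eq_bigr (fun v => if v == gv (w None) then 1 else 0)); last first.
  move=> v /eqP Hw; rewrite sgf_geomA; congr (if _ then _ else _).
  apply/eqP/eqP => E.
    by rewrite -Hw E piS_gv ffunE -E.
  by rewrite {2}E ffunE eqxx.
rewrite -/(push sg (fun v => if v == gv (w None) then 1 else 0) w) push_pt /tr /geomE.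
congr (if _ then _ else _); rewrite ffun_opt_eq piS_gv ffunE eqxx andbT.
by apply: eq_forallb => k; rewrite ffunE eq_sym.
Qed.

End GeomA.

Lemma good_Ax (R : comPzRingType) n (beta alpha : R) (i j : 'I_n) (sg : 'I_n -> bool) :
  sg i = true -> sg j = false -> (i < j)%N ->
  good sg (Ax beta alpha i j) /\ B (Ax beta alpha i j) = Et beta alpha i.
Proof.
move=> Si Sj ij; have gN := good_numA beta alpha Si Sj; have gG := good_geomA R Si Sj ij.
split; first exact: good_qmul.
by rewrite /Ax (B_qmul gN.1 gG.1 gN.2 gG.2) (B_numA _ _ Si Sj) (B_geomA R Si Sj ij).
Qed.


Lemma B_qadd (R : comPzRingType) n (F G : laur R n) u m : B (qadd F G) u m = B F u m + B G u m.
Proof. by rewrite /B -big_split. Qed.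

Lemma B_qscale (R : comPzRingType) n c (F : laur R n) u m : B (qscale c F) u m = c * B F u m.
Proof. by rewrite /B mulr_sumr. Qed.

Lemma B_qzero (R : comPzRingType) n u m : B (qzero R n) u m = 0.
Proof. by rewrite /B big1. Qed.

Lemma B_mono (R : comPzRingType) n (beta alpha : R) (e : xmono n) :
  pathless_mono e ->
  B (A_mono beta alpha e) =
  \big[@psmul R n/@psone R n]_(i < n) pspow (Et beta alpha i) (\sum_(j < n | (i < j)%N) e i j)%N.
Proof.
move=> pe.
set sg := fun k : 'I_n => ~~ [exists l : 'I_n, (l < k)%N && (0 < e l k)%N].
have K : good sg (A_mono beta alpha e) /\ B (A_mono beta alpha e) =
  \big[@psmul R n/@psone R n]_(i < n) \big[@psmul R n/@psone R n]_(j < n | (i < j)%N) pspow (Et beta alpha i) (e i j).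
  apply: (big_ind2 (fun F f => good sg F /\ B F = f)).
  - by split; [exact: good_qone | exact: B_qone].
  - by move=> F f G g [gF <-] [gG <-]; split; [exact: good_qmul | exact: (B_qmul gF.1 gG.1 gF.2 gG.2)].
  move=> i _; apply: (big_ind2 (fun F f => good sg F /\ B F = f)).
  - by split; [exact: good_qone | exact: B_qone].
  - by move=> F f G g [gF <-] [gG <-]; split; [exact: good_qmul | exact: (B_qmul gF.1 gG.1 gF.2 gG.2)].
  move=> j ij; case: (posnP (e i j)) => [->|eij].
    by split; [exact: good_qone | exact: B_qone].
  have Si : sg i = true.
    apply/negP => /existsP[l /andP[li eli]].
    by move: pe => /forallP/(_ l)/forallP/(_ i)/forallP/(_ j); rewrite li ij eli eij.
  have Sj : sg j = false by apply/negbF/existsP; exists i; rewrite ij eij.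
  have [gA BA] := good_Ax beta alpha Si Sj ij.
  have [gP BP] := good_qpow (e i j) gA.
  by split => //; rewrite BP BA.
rewrite K.2; apply: eq_bigr => i _; exact: big_pspow.
Qed.

Unset Implicit Arguments.
Theorem corollary3p17 (R : comPzRingType) (n : nat) (beta alpha : R)
  (hn : (0 < n)%N) (q : xpoly R n) (hq : all (fun ce => pathless_mono ce.2) q) :
  forall (u : 'I_n -> nat) (m : nat),
    E_poly beta alpha (D_poly q) u m = B (A_poly beta alpha q) u m.
Proof.
move=> u m; elim: q hq => [|[c e] q IH] /=; first by rewrite B_qzero.
move=> /andP[pe hq].
rewrite B_qadd B_qscale -IH // (B_mono beta alpha pe).
by [].
Qed.
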